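(* Let $\beta>0$ and $\alpha\in(-1,1)$. Define $\rho_\alpha$ on $\{\pm1\}^2$ by $\rho_\alpha(s,t)=\frac{1+\alpha}{4}$ if $s=t$ and $\rho_\alpha(s,t)=\frac{1-\alpha}{4}$ if $s\ne t$. For a probability distribution $\mu$ on $\{\pm1\}^4$ (with coordinates $(\sigma_1,\tau_1,\sigma_2,\tau_2)$) let \[ g(\mu,\rho_\alpha)=D_{\mathrm{KL}}(\mu\,\|\,\rho_\alpha\otimes\rho_\alpha)+\beta\sum_{x\in A_1}\mu(x)+2\beta\sum_{x\in A_2}\mu(x), \] where $A_1=\{x:\sigma_1=\sigma_2,\tau_1\neq\tau_2\}\cup\{x:\sigma_1\neq\sigma_2,\tau_1=\tau_2\}$, $A_2=\{x:\sigma_1=\sigma_2,\tau_1=\tau_2\}$, and $(\rho_\alpha\otimes\rho_\alpha)(\sigma_1,\tau_1,\sigma_2,\tau_2)=\rho_\alpha(\sigma_1,\tau_1)\rho_\alpha(\sigma_2,\tau_2)$. Let $\mu^*$ be the minimizer of $g(\cdot,\rho_\alpha)$ over all probability distributions $\mu$ on $\{\pm1\}^4$ satisfying $\sum_{(\sigma_2,\tau_2)}\mu(\sigma_1,\tau_1,\sigma_2,\tau_2)=\rho_\alpha(\sigma_1,\tau_1)$ for all $(\sigma_1,\tau_1)$ and $\sum_{(\sigma_1,\tau_1)}\mu(\sigma_1,\tau_1,\sigma_2,\tau_2)=\rho_\alpha(\sigma_2,\tau_2)$ for all $(\sigma_2,\tau_2)$. Then, with $z=\sqrt{(1+e^{-2\beta})^2-\alpha^2(1-e^{-2\beta})^2}$,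 \begin{align*} g(\mu^*,\rho_\alpha)&=2\log2-\log\big((1+e^{-2\beta})(1-e^{-2\beta})^2\big)-(1+\alpha)\log(1+\alpha)-(1-\alpha)\log(1-\alpha)\\ &\quad+\frac{1+\alpha}{2}\log\Big((1+e^{-2\beta})^2+\alpha(1-e^{-2\beta})^2-2e^{-\beta}z\Big)+\frac{1-\alpha}{2}\log\Big((1+e^{-2\beta})^2-\alpha(1-e^{-2\beta})^2-2e^{-\beta}z\Big). \end{align*}
   Context: $D_{\mathrm{KL}}(\mu\|\nu)=\sum_\omega\mu(\omega)\log\frac{\mu(\omega)}{\nu(\omega)}$ with the convention $0\log 0=0$. *)

(* Defs.v *)
(* R : realType, ln = natural log (ln x = 0 for x <= 0). *)
From mathcomp Require Import all_boot all_order all_algebra.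
From mathcomp Require Import all_classical all_reals all_analysis.
Set Implicit Arguments. Unset Strict Implicit. Unset Printing Implicit Defensive.
Import Order.TTheory GRing.Theory Num.Theory.
Local Open Scope ring_scope.

(* Spins {+1,-1} are encoded by bool (true = +1, false = -1); only equality of
   spins matters below. *)

Definition rho {R : realType} (alpha : R) (s t : bool) : R :=
  if s == t then (1 + alpha) / 4 else (1 - alpha) / 4.

Definition dist4 (R : realType) := bool -> bool -> bool -> bool -> R.

Definition is_prob4 {R : realType} (mu : dist4 R) : Prop :=
  (forall s1 t1 s2 t2, 0 <= mu s1 t1 s2 t2) /\
  \sum_(s1 : bool) \sum_(t1 : bool) \sum_(s2 : bool) \sum_(t2 : bool)
     mu s1 t1 s2 t2 = 1.

Definition rho2 {R : realType} (alpha : R) : dist4 R :=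
  fun s1 t1 s2 t2 => rho alpha s1 t1 * rho alpha s2 t2.

Definition KL4 {R : realType} (mu nu : dist4 R) : R :=
  \sum_(s1 : bool) \sum_(t1 : bool) \sum_(s2 : bool) \sum_(t2 : bool)
     (if mu s1 t1 s2 t2 == 0 then 0
      else mu s1 t1 s2 t2 * ln (mu s1 t1 s2 t2 / nu s1 t1 s2 t2)).

Definition inA1 (s1 t1 s2 t2 : bool) : bool :=
  ((s1 == s2) && (t1 != t2)) || ((s1 != s2) && (t1 == t2)).
Definition inA2 (s1 t1 s2 t2 : bool) : bool := (s1 == s2) && (t1 == t2).

Definition gfun {R : realType} (beta alpha : R) (mu : dist4 R) : R :=
  KL4 mu (rho2 alpha)
  + beta * (\sum_(s1 : bool) \sum_(t1 : bool) \sum_(s2 : bool) \sum_(t2 : bool)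
              (if inA1 s1 t1 s2 t2 then mu s1 t1 s2 t2 else 0))
  + 2 * beta * (\sum_(s1 : bool) \sum_(t1 : bool) \sum_(s2 : bool) \sum_(t2 : bool)
              (if inA2 s1 t1 s2 t2 then mu s1 t1 s2 t2 else 0)).

Definition coupling {R : realType} (alpha : R) (mu : dist4 R) : Prop :=
  is_prob4 mu /\
  (forall s1 t1, \sum_(s2 : bool) \sum_(t2 : bool) mu s1 t1 s2 t2 = rho alpha s1 t1) /\
  (forall s2 t2, \sum_(s1 : bool) \sum_(t1 : bool) mu s1 t1 s2 t2 = rho alpha s2 t2).

Definition gvalue {R : realType} (beta alpha : R) : R :=
  let q := expR (- (2 * beta)) in
  let z := Num.sqrt ((1 + q) ^+ 2 - alpha ^+ 2 * (1 - q) ^+ 2) in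
  2 * ln 2 - ln ((1 + q) * (1 - q) ^+ 2)
  - (1 + alpha) * ln (1 + alpha) - (1 - alpha) * ln (1 - alpha)
  + (1 + alpha) / 2 * ln ((1 + q) ^+ 2 + alpha * (1 - q) ^+ 2 - 2 * expR (- beta) * z)
  + (1 - alpha) / 2 * ln ((1 + q) ^+ 2 - alpha * (1 - q) ^+ 2 - 2 * expR (- beta) * z).

(* Main.v *)
Require Import Defs.
From mathcomp Require Import all_boot all_order all_algebra.
From mathcomp Require Import all_classical all_reals all_analysis.
From mathcomp Require Import ring lra.
Import Order.TTheory GRing.Theory Num.Theory.
Local Open Scope ring_scope.

Definition EE {R : realType} (beta : R) := expR (- beta).
Definition uu {R : realType} (beta : R) := 1 + EE beta ^+ 2.
Definition vv {R : realType} (beta : R) := 2 * EE beta.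
Definition ww {R : realType} (beta : R) := 1 - EE beta ^+ 2.
Definition zz {R : realType} (beta alpha : R) :=
  Num.sqrt (uu beta ^+ 2 - alpha ^+ 2 * ww beta ^+ 2).
Definition Xp {R : realType} (beta alpha : R) :=
  uu beta ^+ 2 + alpha * ww beta ^+ 2 - vv beta * zz beta alpha.
Definition Xm {R : realType} (beta alpha : R) :=
  uu beta ^+ 2 - alpha * ww beta ^+ 2 - vv beta * zz beta alpha.
Definition pp {R : realType} (beta alpha : R) :=
  Num.sqrt (Xp beta alpha / (4 * uu beta * ww beta ^+ 2)).
Definition qq {R : realType} (beta alpha : R) :=
  Num.sqrt (Xm beta alpha / (4 * uu beta * ww beta ^+ 2)).

Lemma key {R : realType} (beta alpha : R) :
  0 < beta -> -1 < alpha -> alpha < 1 ->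
  [/\ 0 < Xp beta alpha, 0 < Xm beta alpha, 0 < uu beta, 0 < ww beta &
  [/\ 0 < pp beta alpha, 0 < qq beta alpha,
   pp beta alpha ^+ 2 = Xp beta alpha / (4 * uu beta * ww beta ^+ 2),
   qq beta alpha ^+ 2 = Xm beta alpha / (4 * uu beta * ww beta ^+ 2) &
   [/\ pp beta alpha ^+ 2 * uu beta + pp beta alpha * qq beta alpha * vv beta = (1 + alpha) / 4 &
   qq beta alpha ^+ 2 * uu beta + pp beta alpha * qq beta alpha * vv beta = (1 - alpha) / 4]]].
Proof.
move=> hb ha1 ha2.
have E0 : 0 < EE beta by rewrite /EE expR_gt0.
have E1 : EE beta < 1 by rewrite /EE expR_lt1 oppr_lt0.
have u0 : 0 < uu beta by rewrite /uu; nra.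
have w0 : 0 < ww beta by rewrite /ww; nra.
have v0 : 0 < vv beta by rewrite /vv; nra.
have uv : vv beta < uu beta by rewrite /uu /vv; nra.
have uvw : uu beta ^+ 2 - vv beta ^+ 2 = ww beta ^+ 2 by rewrite /uu /vv /ww; ring.
set u := uu beta in u0 uv uvw *; set v := vv beta in v0 uv uvw *;
set w := ww beta in w0 uvw *.
have a2 : alpha ^+ 2 < 1 by nra.
have w2a : 0 < w ^+ 2 * (1 - alpha ^+ 2) by rewrite mulr_gt0 ?exprn_gt0 //; lra.
have Z0 : 0 <= u ^+ 2 - alpha ^+ 2 * w ^+ 2 by have := sqr_ge0 v; lra.
have z0 : 0 <= zz beta alpha by rewrite /zz sqrtr_ge0.
have z2 : zz beta alpha ^+ 2 = u ^+ 2 - alpha ^+ 2 * w ^+ 2 by rewrite /zz sqr_sqrtr.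
set z := zz beta alpha in z0 z2 *.
have aw : 0 <= alpha ^+ 2 * w ^+ 2 by rewrite mulr_ge0 // sqr_ge0.
have zu2 : z ^+ 2 <= u ^+ 2 by rewrite z2; lra.
have zu : z <= u by nra.
have zv2 : v ^+ 2 < z ^+ 2 by rewrite z2; lra.
have zv : v < z by nra.
have prod : Xp beta alpha * Xm beta alpha = (u * (z - v)) ^+ 2.
  apply/eqP; rewrite -subr_eq0 /Xp /Xm -/u -/v -/w -/z.
  have -> : (u ^+ 2 + alpha * w ^+ 2 - v * z) * (u ^+ 2 - alpha * w ^+ 2 - v * z) -
     (u * (z - v)) ^+ 2 = (v ^+ 2 - u ^+ 2) * (z ^+ 2 - (u ^+ 2 - alpha ^+ 2 * w ^+ 2))
     + alpha ^+ 2 * w ^+ 2 * (u ^+ 2 - v ^+ 2 - w ^+ 2) by ring.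
  by rewrite z2 uvw !subrr !mulr0 addr0.
have vz : v * z <= v * u by rewrite ler_wpM2l // ltW.
have uu0 : 0 < u * (u - v) by rewrite mulr_gt0 // subr_gt0.
have sum : 0 < Xp beta alpha + Xm beta alpha.
  rewrite /Xp /Xm -/u -/v -/w -/z. have : u ^+ 2 = u * u by rewrite expr2. lra.
have Xp0 : 0 < Xp beta alpha.
  have : 0 < Xp beta alpha * Xm beta alpha by rewrite prod exprn_gt0 // mulr_gt0 // subr_gt0.
  nra.
have Xm0 : 0 < Xm beta alpha.
  have : 0 < Xp beta alpha * Xm beta alpha by rewrite prod exprn_gt0 // mulr_gt0 // subr_gt0.
  nra.
have D0 : 0 < 4 * u * w ^+ 2 by nra.
have P2 : pp beta alpha ^+ 2 = Xp beta alpha / (4 * u * w ^+ 2).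
  by rewrite /pp sqr_sqrtr // divr_ge0 // ltW.
have Q2 : qq beta alpha ^+ 2 = Xm beta alpha / (4 * u * w ^+ 2).
  by rewrite /qq sqr_sqrtr // divr_ge0 // ltW.
have p0 : 0 < pp beta alpha by rewrite /pp sqrtr_gt0 divr_gt0.
have q0 : 0 < qq beta alpha by rewrite /qq sqrtr_gt0 divr_gt0.
have PQ : pp beta alpha * qq beta alpha = (z - v) / (4 * w ^+ 2).
  have r0 : 0 < (z - v) / (4 * w ^+ 2) by apply: divr_gt0; nra.
  have sq : (pp beta alpha * qq beta alpha) ^+ 2 = ((z - v) / (4 * w ^+ 2)) ^+ 2.
    rewrite exprMn P2 Q2 mulrACA -invfM prod.
    by field; rewrite (gt_eqF w0) (gt_eqF u0).
  have pq0 : 0 < pp beta alpha * qq beta alpha by rewrite mulr_gt0.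
  nra.
have e : u ^+ 2 = w ^+ 2 + v ^+ 2 by lra.
split=> //; split=> //; split.
- rewrite P2 PQ /Xp -/u -/v -/w -/z e.
  by field; rewrite (gt_eqF w0) (gt_eqF u0).
- rewrite Q2 PQ /Xm -/u -/v -/w -/z e.
  by field; rewrite (gt_eqF w0) (gt_eqF u0).
Qed.

Definition S4 {R : realType} (F : dist4 R) : R :=
  \sum_(s1 : bool) \sum_(t1 : bool) \sum_(s2 : bool) \sum_(t2 : bool) F s1 t1 s2 t2.

Lemma S4D {R : realType} (F G : dist4 R) :
  S4 (fun a b c d => F a b c d + G a b c d) = S4 F + S4 G.
Proof. rewrite /S4 !big_bool /=; ring. Qed.

Lemma S4B {R : realType} (F G : dist4 R) :
  S4 (fun a b c d => F a b c d - G a b c d) = S4 F - S4 G.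
Proof. rewrite /S4 !big_bool /=; ring. Qed.

Lemma eq_S4 {R : realType} (F G : dist4 R) :
  (forall a b c d, F a b c d = G a b c d) -> S4 F = S4 G.
Proof.
move=> H; rewrite /S4; apply: eq_bigr => a _; apply: eq_bigr => b _;
  apply: eq_bigr => c _; apply: eq_bigr => d _; exact: H.
Qed.

Lemma ler_S4 {R : realType} (F G : dist4 R) :
  (forall a b c d, F a b c d <= G a b c d) -> S4 F <= S4 G.
Proof.
move=> H; rewrite /S4; apply: ler_sum => a _; apply: ler_sum => b _;
  apply: ler_sum => c _; apply: ler_sum => d _; exact: H.
Qed.

Definition cc {R : realType} (beta : R) (s1 t1 s2 t2 : bool) : R :=
  (if inA1 s1 t1 s2 t2 then beta else 0) + (if inA2 s1 t1 s2 t2 then 2 * beta else 0).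
Definition ff {R : realType} (beta alpha : R) (s t : bool) : R :=
  if s == t then pp beta alpha else qq beta alpha.
Definition mus {R : realType} (beta alpha : R) : dist4 R :=
  fun s1 t1 s2 t2 => ff beta alpha s1 t1 * ff beta alpha s2 t2 * expR (- cc beta s1 t1 s2 t2).
Definition hh {R : realType} (beta alpha : R) (s t : bool) : R :=
  ln (ff beta alpha s t / rho alpha s t).
Definition T1 {R : realType} (mu nu : dist4 R) : dist4 R :=
  fun a b c d => if mu a b c d == 0 then 0 else mu a b c d * ln (mu a b c d / nu a b c d).


Lemma rho_gt0 {R : realType} (alpha : R) s t :
  -1 < alpha -> alpha < 1 -> 0 < rho alpha s t.
Proof. by move=> h1 h2; rewrite /rho; case: (s == t); lra. Qed.

Lemma ff_gt0 {R : realType} (beta alpha : R) s t :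
  0 < beta -> -1 < alpha -> alpha < 1 -> 0 < ff beta alpha s t.
Proof.
move=> hb h1 h2; have [_ _ _ _ [p0 q0 _ _ _]] := key _ _ hb h1 h2.
by rewrite /ff; case: (s == t).
Qed.

Lemma mus_gt0 {R : realType} (beta alpha : R) a b c d :
  0 < beta -> -1 < alpha -> alpha < 1 -> 0 < mus beta alpha a b c d.
Proof.
move=> hb h1 h2; rewrite /mus !mulr_gt0 ?ff_gt0 ?expR_gt0 //.
Qed.

Lemma mus_marg {R : realType} (beta alpha : R) :
  0 < beta -> -1 < alpha -> alpha < 1 ->
  (forall s1 t1, \sum_(s2 : bool) \sum_(t2 : bool) mus beta alpha s1 t1 s2 t2 = rho alpha s1 t1) /\
  (forall s2 t2, \sum_(s1 : bool) \sum_(t1 : bool) mus beta alpha s1 t1 s2 t2 = rho alpha s2 t2).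
Proof.
move=> hb h1 h2; have [_ _ _ _ [_ _ _ _ [Hp Hq]]] := key _ _ hb h1 h2.
move: Hp Hq; rewrite /uu /vv.
have e0 : expR (- (0 + 0)) = 1 :> R by rewrite addr0 oppr0 expR0.
have e1 : expR (- (beta + 0)) = EE beta by rewrite addr0.
have e2 : expR (- (0 + 2 * beta)) = EE beta ^+ 2.
  by rewrite add0r /EE expr2 -expRD; congr expR; lra.
set p := pp beta alpha; set q := qq beta alpha; set E := EE beta.
move=> Hp Hq.
split=> [s1 t1|s2 t2]; rewrite !big_bool /mus /cc /ff /rho /inA1 /inA2 /=;
  [case: s1; case: t1|case: s2; case: t2]; rewrite /= ?e0 ?e1 ?e2 -/p -/q -/E; first [rewrite -Hp; ring | rewrite -Hq; ring].
Qed.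

Lemma mus_coupling {R : realType} (beta alpha : R) :
  0 < beta -> -1 < alpha -> alpha < 1 -> coupling alpha (mus beta alpha).
Proof.
move=> hb h1 h2; have [M1 M2] := mus_marg _ _ hb h1 h2.
split; last by split.
split=> [a b c d|]; first exact/ltW/mus_gt0.
transitivity (\sum_(s1 : bool) \sum_(t1 : bool) rho alpha s1 t1).
  by apply: eq_bigr => s _; apply: eq_bigr => t _; rewrite M1.
rewrite !big_bool /rho /=; lra.
Qed.

Lemma T1_mus {R : realType} (beta alpha : R) a b c d :
  0 < beta -> -1 < alpha -> alpha < 1 ->
  T1 (mus beta alpha) (mus beta alpha) a b c d = 0.
Proof.
move=> hb h1 h2; have m0 := mus_gt0 beta alpha a b c d hb h1 h2.
by rewrite /T1 (gt_eqF m0) divff ?ln1 ?mulr0 // gt_eqF.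
Qed.

Lemma T1_ge {R : realType} (beta alpha : R) (mu : dist4 R) a b c d :
  0 < beta -> -1 < alpha -> alpha < 1 -> 0 <= mu a b c d ->
  mu a b c d - mus beta alpha a b c d <= T1 mu (mus beta alpha) a b c d.
Proof.
move=> hb h1 h2 hm; have m0 := mus_gt0 beta alpha a b c d hb h1 h2.
rewrite /T1; case: eqP => [->|/eqP hne]; first lra.
have mp : 0 < mu a b c d by rewrite lt0r hne.
set x := mu a b c d in mp hm hne *; set y := mus beta alpha a b c d in m0 *.
have yx : 0 < y / x by rewrite divr_gt0.
have : 1 + ln (y / x) <= y / x by rewrite -[leRHS](lnK yx) expR_ge1Dx.
have -> : x / y = (y / x)^-1 by rewrite invf_div.
rewrite lnV //.
move=> H.
have : x * ln (y / x) <= x * (y / x - 1) by rewrite ler_pM2l //; lra.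
have -> : x * (y / x - 1) = y - x by field; rewrite gt_eqF.
rewrite mulrN; lra.
Qed.

Lemma decomp_pt {R : realType} (beta alpha : R) (mu : dist4 R) a b c d :
  0 < beta -> -1 < alpha -> alpha < 1 -> 0 <= mu a b c d ->
  (if mu a b c d == 0 then 0 else mu a b c d * ln (mu a b c d / rho2 alpha a b c d))
  + beta * (if inA1 a b c d then mu a b c d else 0)
  + 2 * beta * (if inA2 a b c d then mu a b c d else 0)
  = T1 mu (mus beta alpha) a b c d
    + mu a b c d * (hh beta alpha a b + hh beta alpha c d).
Proof.
move=> hb h1 h2 hm.
have cost : beta * (if inA1 a b c d then mu a b c d else 0)
  + 2 * beta * (if inA2 a b c d then mu a b c d else 0) = mu a b c d * cc beta a b c d.
  by rewrite /cc; case: (inA1 a b c d); case: (inA2 a b c d); ring.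
rewrite -addrA cost /T1.
case: eqP => [->|/eqP hne]; first by ring.
have mp : 0 < mu a b c d by rewrite lt0r hne.
have M0 := mus_gt0 beta alpha a b c d hb h1 h2.
have r1 := rho_gt0 alpha a b h1 h2; have r2 := rho_gt0 alpha c d h1 h2.
have f1 := ff_gt0 beta alpha a b hb h1 h2; have f2 := ff_gt0 beta alpha c d hb h1 h2.
have E0 := expR_gt0 (- cc beta a b c d).
have e : mu a b c d / rho2 alpha a b c d =
  (mu a b c d / mus beta alpha a b c d) *
  ((ff beta alpha a b / rho alpha a b) *
   ((ff beta alpha c d / rho alpha c d) * expR (- cc beta a b c d))).
  rewrite /rho2 /mus; field.
  by rewrite !gt_eqF.
have A0 : 0 < mu a b c d / mus beta alpha a b c d by rewrite divr_gt0.
have B0 : 0 < ff beta alpha a b / rho alpha a b by rewrite divr_gt0.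
have C0 : 0 < ff beta alpha c d / rho alpha c d by rewrite divr_gt0.
rewrite e.
move: A0 B0 C0 E0.
set A := mu a b c d / mus beta alpha a b c d.
set B := ff beta alpha a b / rho alpha a b.
set C := ff beta alpha c d / rho alpha c d.
set D := expR (- cc beta a b c d).
move=> A0 B0 C0 D0.
have pA : A \in Num.pos by rewrite posrE.
have pB : B \in Num.pos by rewrite posrE.
have pC : C \in Num.pos by rewrite posrE.
have pD : D \in Num.pos by rewrite posrE.
have pCD : C * D \in Num.pos by rewrite posrE mulr_gt0.
have pBCD : B * (C * D) \in Num.pos by rewrite posrE; apply: mulr_gt0 => //; apply: mulr_gt0.
rewrite (lnM pA pBCD) (lnM pB pCD) (lnM pC pD) /D expRK /B /C /hh.
ring.
Qed.

Lemma gfun_decomp {R : realType} (beta alpha : R) (mu : dist4 R) :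
  0 < beta -> -1 < alpha -> alpha < 1 -> (forall a b c d, 0 <= mu a b c d) ->
  gfun beta alpha mu = S4 (T1 mu (mus beta alpha))
    + S4 (fun a b c d => mu a b c d * (hh beta alpha a b + hh beta alpha c d)).
Proof.
move=> hb h1 h2 hm; rewrite -S4D.
transitivity (S4 (fun a b c d =>
  (if mu a b c d == 0 then 0 else mu a b c d * ln (mu a b c d / rho2 alpha a b c d))
  + beta * (if inA1 a b c d then mu a b c d else 0)
  + 2 * beta * (if inA2 a b c d then mu a b c d else 0))).
  rewrite /gfun /KL4 /S4 !big_bool /=; ring.
by apply: eq_S4 => a b c d; apply: decomp_pt.
Qed.

Lemma marg_term {R : realType} (beta alpha : R) (mu : dist4 R) :
  coupling alpha mu ->
  S4 (fun a b c d => mu a b c d * (hh beta alpha a b + hh beta alpha c d)) =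
  \sum_(s : bool) \sum_(t : bool) rho alpha s t * hh beta alpha s t
  + \sum_(s : bool) \sum_(t : bool) rho alpha s t * hh beta alpha s t.
Proof.
move=> [_ [H1 H2]].
transitivity (\sum_(s : bool) \sum_(t : bool)
    (\sum_(s2 : bool) \sum_(t2 : bool) mu s t s2 t2) * hh beta alpha s t
  + \sum_(s : bool) \sum_(t : bool)
    (\sum_(s1 : bool) \sum_(t1 : bool) mu s1 t1 s t) * hh beta alpha s t).
  rewrite /S4 !big_bool /=; ring.
by congr (_ + _); apply: eq_bigr => s _; apply: eq_bigr => t _; rewrite ?H1 ?H2.
Qed.

Lemma gvalueE {R : realType} (beta alpha : R) :
  gvalue beta alpha = 2 * ln 2 - ln (uu beta * ww beta ^+ 2)
  - (1 + alpha) * ln (1 + alpha) - (1 - alpha) * ln (1 - alpha)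
  + (1 + alpha) / 2 * ln (Xp beta alpha) + (1 - alpha) / 2 * ln (Xm beta alpha).
Proof.
have e : expR (- (2 * beta)) = expR (- beta) ^+ 2.
  by rewrite expr2 -expRD; congr expR; lra.
by rewrite /gvalue e.
Qed.

Lemma lnpos_div {R : realType} (x y : R) : 0 < x -> 0 < y -> ln (x / y) = ln x - ln y.
Proof. by move=> hx hy; rewrite ln_div ?posrE. Qed.

Lemma lnpos_mul {R : realType} (x y : R) : 0 < x -> 0 < y -> ln (x * y) = ln x + ln y.
Proof. by move=> hx hy; rewrite lnM ?posrE. Qed.

Lemma value {R : realType} (beta alpha : R) :
  0 < beta -> -1 < alpha -> alpha < 1 ->
  \sum_(s : bool) \sum_(t : bool) rho alpha s t * hh beta alpha s t
  + \sum_(s : bool) \sum_(t : bool) rho alpha s t * hh beta alpha s t = gvalue beta alpha.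
Proof.
move=> hb h1 h2; have [Xp0 Xm0 u0 w0 [p0 q0 P2 Q2 _]] := key _ _ hb h1 h2.
rewrite gvalueE !big_bool /rho /hh /ff /=.
have a1 : 0 < (1 + alpha) by lra.
have a2 : 0 < (1 - alpha) by lra.
have l4 : ln (4 : R) = 2 * ln 2.
  by rewrite (_ : 4 = 2 * 2 :> R) ?lnpos_mul //; [ring | ring].
have uw : 0 < uu beta * ww beta ^+ 2 by rewrite mulr_gt0 ?exprn_gt0.
have D : ln (4 * uu beta * ww beta ^+ 2) = ln 4 + ln (uu beta * ww beta ^+ 2).
  by rewrite -mulrA lnpos_mul.
have Lp : ln (pp beta alpha) = (ln (Xp beta alpha) - ln 4 - ln (uu beta * ww beta ^+ 2)) / 2.
  have : ln (pp beta alpha ^+ 2) = 2 * ln (pp beta alpha) by rewrite expr2 lnpos_mul //; ring.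
  rewrite P2 lnpos_div // ?D; last by rewrite -mulrA mulr_gt0.
  move=> H; lra.
have Lq : ln (qq beta alpha) = (ln (Xm beta alpha) - ln 4 - ln (uu beta * ww beta ^+ 2)) / 2.
  have : ln (qq beta alpha ^+ 2) = 2 * ln (qq beta alpha) by rewrite expr2 lnpos_mul //; ring.
  rewrite Q2 lnpos_div // ?D; last by rewrite -mulrA mulr_gt0.
  move=> H; lra.
rewrite !lnpos_div ?divr_gt0 // Lp Lq l4.
by field.
Qed.

Theorem lemma8p2 (R : realType) (beta alpha : R) :
  0 < beta -> -1 < alpha -> alpha < 1 ->
  exists mustar : dist4 R,
    [/\ coupling alpha mustar,
        (forall mu : dist4 R, coupling alpha mu -> gfun beta alpha mustar <= gfun beta alpha mu)
      & gfun beta alpha mustar = gvalue beta alpha].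
Proof.
move=> hb h1 h2.
have Cs := mus_coupling _ _ hb h1 h2.
have Gs : gfun beta alpha (mus beta alpha) =
  \sum_(s : bool) \sum_(t : bool) rho alpha s t * hh beta alpha s t
  + \sum_(s : bool) \sum_(t : bool) rho alpha s t * hh beta alpha s t.
  rewrite gfun_decomp //; last by case: Cs => [[]].
  rewrite marg_term // (@eq_S4 _ _ (fun _ _ _ _ => 0)); last first.
    by move=> a b c d; apply: T1_mus.
  by rewrite /S4 !big_bool /=; ring.
exists (mus beta alpha); split => //; last by rewrite Gs value.
move=> mu Cm.
have Cm' := Cm; case: Cm' => [[mp m1] _].
rewrite Gs gfun_decomp // marg_term // lerDr.
have H := @ler_S4 _ _ _ (fun a b c d => T1_ge beta alpha mu a b c d hb h1 h2 (mp a b c d)).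
have H0 : 0 <= S4 (fun a b c d => mu a b c d - mus beta alpha a b c d).
  rewrite S4B; case: Cs => [[_ s1] _].
  by rewrite /S4 m1 s1 subrr.
exact: (le_trans H0 H).
Qed.
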